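(* Let $S=(s_1,\dots,s_m)\in[n]^m$ and let $P=([a_1,b_1],\dots,[a_k,b_k])$ be a partition of $[n]$ into $k$ consecutive intervals, so $a_1=1$, $b_k=n$ and $a_{i+1}=b_i+1$. For each $i$, let $S_i$ be the sequence obtained by going through $S$ in order and, for each $s_j\in[a_i,b_i]$, appending $s_j-a_i+1$; thus $S_i$ is a sequence over $[b_i-a_i+1]$. Let $\tilde S=(\tilde s_1,\dots,\tilde s_m)\in[k]^m$ with $\tilde s_j=i$ iff $s_j\in[a_i,b_i]$. Then $\mathrm{OPT}(S)\le\sum_{i=1}^k\mathrm{OPT}(S_i)+3\,\mathrm{OPT}(\tilde S)$.
   Context: Dynamic BST model: for a sequence over key set $[N]$, an algorithm first chooses an initial BST on $[N]$. To serve access $s_t$ it touches a set of nodes forming a connected subtree containing the root and $s_t$, may rearrange the touched nodes into any BST shape (untouched subtrees reattached in the unique valid way), and pays the number of touched nodes. $\mathrm{OPT}$ of a sequence is the minimum total cost over all offline algorithms on its key set. *)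

(* Defs.v *)
From mathcomp Require Import all_boot.
From mathcomp Require Import boolp.

Set Implicit Arguments.
Unset Strict Implicit.
Unset Printing Implicit Defensive.

Inductive tree := Leaf | Node of tree & nat & tree.

Fixpoint inorder (t : tree) : seq nat :=
  if t is Node l k r then inorder l ++ k :: inorder r else [::].

Definition is_bst (N : nat) (t : tree) : Prop := inorder t = iota 1 N.

Fixpoint anc (t : tree) (x : nat) : seq nat :=
  if t is Node l k r then
    k :: (if x == k then [::] else if x < k then anc l x else anc r x)
  else [::].

Fixpoint find_sub (t : tree) (x : nat) : tree :=
  if t is Node l k r then
    if x == k then t else if x < k then find_sub l x else find_sub r x
  else Leaf.

(* One access to s: the touched set R (without repetitions) is a connected
   subtree of T containing the root and s (closed under ancestors); the
   touched nodes are rearranged into a BST T' on [N] in which every untouched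
   node keeps its whole subtree (untouched subtrees reattached). *)
Definition step (N : nat) (T : tree) (s : nat) (R : seq nat) (T' : tree) : Prop :=
  [/\ uniq R, {subset R <= inorder T}, s \in R,
      (forall x, x \in R -> {subset anc T x <= R}) &
      is_bst N T'] /\
      (forall x, x \in inorder T -> x \notin R -> find_sub T x = find_sub T' x).

Fixpoint serves (N : nat) (T : tree) (S : seq nat) (c : nat) : Prop :=
  if S is s :: S' then
    exists R T' c', [/\ step N T s R T', serves N T' S' c' & c = size R + c']
  else c = 0.

Definition feasible (N : nat) (S : seq nat) (c : nat) : Prop :=
  exists T0, is_bst N T0 /\ serves N T0 S c.

Lemma feasible_ex (N : nat) (S : seq nat) :
  (exists c, feasible N S c) -> exists c, `[< feasible N S c >].
Proof. by case=> c h; exists c; apply/asboolP. Qed.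

(* OPT = minimum total cost (0 by convention if no algorithm exists) *)
Definition OPT (N : nat) (S : seq nat) : nat :=
  match pselect (exists c, feasible N S c) with
  | left H => ex_minn (feasible_ex H)
  | right _ => 0
  end.

(* Main.v *)
Require Import Defs.
From mathcomp Require Import all_boot zify.
From mathcomp Require boolp.

Set Implicit Arguments.
Unset Strict Implicit.
Unset Printing Implicit Defensive.

Definition srt t := pairwise ltn (inorder t).

Lemma srt_node l k r : srt (Node l k r) ->
  [/\ srt l, srt r, (forall y, y \in inorder l -> y < k) &
      (forall y, y \in inorder r -> k < y)].
Proof.
rewrite /srt /= pairwise_cat pairwise_cons allrel_consr.
case/and3P=> /andP[/allP Hl _] Hpl /andP[/allP Hr Hpr]; split=> //.
Qed.

Lemma sub_find t x : {subset inorder (find_sub t x) <= inorder t}.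
Proof.
elim: t => //= l IHl k r IHr y.
case: ifP => _ //; case: ifP => _ Hy; rewrite mem_cat inE.
- by rewrite IHl.
- by rewrite IHr ?orbT.
Qed.

Lemma anc_in t x : {subset anc t x <= inorder t}.
Proof.
elim: t => //= l IHl k r IHr y; rewrite inE mem_cat inE => /orP[->|]; first by rewrite orbT.
case: ifP => _ //; case: ifP => _ Hy.
- by rewrite IHl.
- by rewrite IHr ?orbT.
Qed.

Lemma find_sub_anc t x y : srt t -> y \in inorder (find_sub t x) -> x \in anc t y.
Proof.
elim: t => //= l IHl k r IHr /srt_node[sl sr Hl Hr].
case: (eqVneq x k) => [->|xk]; first by rewrite inE eqxx.
case: ifP => xlt Hy.
- have yl := sub_find Hy; have := Hl _ yl => ylt.
  by rewrite inE (ltn_eqF ylt) ylt IHl ?orbT.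
- have yr := sub_find Hy; have := Hr _ yr => ylt.
  by rewrite inE (gtn_eqF ylt) ltnNge (ltnW ylt) /= IHr ?orbT.
Qed.

Lemma find_sub_node t x : srt t -> x \in inorder t -> find_sub t x <> Leaf.
Proof.
elim: t => //= l IHl k r IHr /srt_node[sl sr Hl Hr].
rewrite mem_cat inE; case: (eqVneq x k) => //= xk.
case: ifP => xlt.
- case/orP=> // H; first exact: IHl.
  by have := Hr _ H; lia.
- case/orP=> H; last exact: IHr.
  by have := Hl _ H; lia.
Qed.

Fixpoint shift d t :=
  if t is Node l k r then Node (shift d l) (k + d) (shift d r) else Leaf.

Lemma inorder_shift d t : inorder (shift d t) = map (addn^~ d) (inorder t).
Proof. by elim: t => //= l IHl k r IHr; rewrite IHl IHr map_cat. Qed.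

Lemma anc_shift d t y : anc (shift d t) (y + d) = map (addn^~ d) (anc t y).
Proof.
elim: t => //= l IHl k r IHr; rewrite eqn_add2r ltn_add2r.
case: ifP => _ //=; case: ifP => _; by rewrite /= ?IHl ?IHr.
Qed.

Lemma find_sub_shift d t y : find_sub (shift d t) (y + d) = shift d (find_sub t y).
Proof.
elim: t => //= l IHl k r IHr; rewrite eqn_add2r ltn_add2r.
case: ifP => _ //=; case: ifP => _; by rewrite /= ?IHl ?IHr.
Qed.

Fixpoint dmin t :=
  match t with
  | Leaf => Leaf
  | Node Leaf _ r => r
  | Node l k r => Node (dmin l) k r
  end.

Fixpoint dmax t :=
  match t with
  | Leaf => Leaf
  | Node l _ Leaf => l
  | Node l k r => Node l k (dmax r)
  end.

Lemma inorder_dmin t x s : inorder t = x :: s -> inorder (dmin t) = s.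
Proof.
elim: t x s => //= l IHl k r _ x s.
case: l IHl => [|l1 k1 r1] IHl /=; first by case.
case E: (inorder l1 ++ k1 :: inorder r1) => [|y s1] //=; first by case: (inorder l1) E.
case=> _ <-; by rewrite (IHl y s1).
Qed.

Lemma inorder_dmax t x s : inorder t = rcons s x -> inorder (dmax t) = s.
Proof.
elim: t x s => [x s|l _ k r IHr x s] /=; first by case: s.
case: r IHr => [|l1 k1 r1] IHr /=.
  by rewrite cats1 => /rcons_inj [].
case/lastP E: (inorder l1 ++ k1 :: inorder r1) => [|s1 y].
  by case: (inorder l1) E.
rewrite -rcons_cons -rcons_cat => /rcons_inj [<- _].
by rewrite (IHr y s1).
Qed.

Definition isLeaf t := if t is Leaf then true else false.
Lemma isLeafP t : isLeaf t -> t = Leaf. Proof. by case: t. Qed.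
Lemma dmin_node l k r : ~~ isLeaf l -> dmin (Node l k r) = Node (dmin l) k r.
Proof. by case: l. Qed.
Lemma dmax_node l k r : ~~ isLeaf r -> dmax (Node l k r) = Node l k (dmax r).
Proof. by case: r => //; case: l. Qed.
Lemma inorder_nonleaf t : ~~ isLeaf t -> exists x s, inorder t = x :: s.
Proof.
case: t => //= l k r _; case: (inorder l) => [|x s] /=; by do 2 eexists.
Qed.
Lemma inorder_nonleafr t : ~~ isLeaf t -> exists x s, inorder t = rcons s x.
Proof.
case: t => //= l k r _; case/lastP: (inorder r) => [|s x] /=.
  by exists k, (inorder l); rewrite cats1.
by exists x, (inorder l ++ k :: s); rewrite rcons_cat.
Qed.

Lemma anc_dmin t y : srt t -> y \in inorder (dmin t) -> {subset anc (dmin t) y <= anc t y}.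
Proof.
elim: t y => [//|l IHl k r IHr] y /srt_node[sl sr Hl Hr].
case: (boolP (isLeaf l)) => [/isLeafP -> /=|nl].
  move=> Hy z Hz; have ky := Hr _ Hy.
  by rewrite inE (gtn_eqF ky) ltnNge (ltnW ky) /= Hz orbT.
rewrite dmin_node //= mem_cat inE => Hy z; rewrite !inE.
case/orP=> [->//|]; case: ifP => // yk; case: ifP => ylt Hz; last by rewrite Hz orbT.
apply/orP; right; apply: IHl => //.
case/or3P: Hy => //; first by rewrite yk.
by move/Hr; lia.
Qed.

Lemma anc_dmax t y : srt t -> y \in inorder (dmax t) -> {subset anc (dmax t) y <= anc t y}.
Proof.
elim: t y => [//|l IHl k r IHr] y /srt_node[sl sr Hl Hr].
case: (boolP (isLeaf r)) => [/isLeafP -> /=|nr].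
  move=> Hy z Hz; have ky := Hl _ Hy.
  by rewrite inE (ltn_eqF ky) ky /= Hz orbT.
rewrite dmax_node //= mem_cat inE => Hy z; rewrite !inE.
case/orP=> [->//|]; case: ifP => // yk; case: ifP => // ylt Hz.
  by rewrite Hz orbT.
apply/orP; right; apply: IHr => //.
case/or3P: Hy => //; last by rewrite yk.
by move/Hl; lia.
Qed.

Definition dminif m u := if m \in inorder u then dmin u else u.
Definition dmaxif m u := if m \in inorder u then dmax u else u.

Lemma find_sub_dminE t y : srt t -> y \in inorder t -> y != head 0 (inorder t) ->
  find_sub (dmin t) y = dminif (head 0 (inorder t)) (find_sub t y).
Proof.
elim: t y => [//|l IHl k r IHr] y /srt_node[sl sr Hl Hr].
case: (boolP (isLeaf l)) => [/isLeafP -> /=|nl].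
  rewrite inE => /orP[/eqP->|Hy]; first by rewrite eqxx.
  have ky := Hr _ Hy => _.
  rewrite (gtn_eqF ky) ltnNge (ltnW ky) /= /dminif.
  case: ifP => // /sub_find /Hr; lia.
have [m [s Es]] := inorder_nonleaf nl.
rewrite dmin_node // => Hy ym.
move: Hy; rewrite /= mem_cat inE => Hy.
have {}ym : y != m by move: ym; rewrite /= Es.
have Eh : head 0 (inorder l ++ k :: inorder r) = m by rewrite Es.
rewrite /= Eh.
case: (eqVneq y k) => [Eyk|yk] /=; first subst y.
  by rewrite /dminif dmin_node //= mem_cat Es inE eqxx.
case: ifP => ylt.
  have yl : y \in inorder l.
    case/or3P: Hy => //; first by rewrite (negPf yk).
    by move/Hr; lia.
  by rewrite IHl // Es.
rewrite /dminif; case: ifP => // /sub_find /Hr.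
have : m \in inorder l by rewrite Es inE eqxx.
by move/Hl; lia.
Qed.

Lemma find_sub_dmaxE t y : srt t -> y \in inorder t -> y != last 0 (inorder t) ->
  find_sub (dmax t) y = dmaxif (last 0 (inorder t)) (find_sub t y).
Proof.
elim: t y => [//|l IHl k r IHr] y /srt_node[sl sr Hl Hr].
case: (boolP (isLeaf r)) => [/isLeafP -> /=|nr].
  rewrite last_cat /= mem_cat inE orbC => /orP[/eqP->|Hy]; first by rewrite eqxx.
  have ky := Hl _ Hy => _.
  rewrite (ltn_eqF ky) ky /= /dmaxif.
  case: ifP => // /sub_find /Hl; lia.
have [m [s Es]] := inorder_nonleafr nr.
rewrite dmax_node // => Hy ym.
move: Hy; rewrite /= mem_cat inE => Hy.
have {}ym : y != m by move: ym; rewrite /= Es last_cat /= last_rcons.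
have Eh : last 0 (inorder l ++ k :: inorder r) = m by rewrite Es last_cat /= last_rcons.
rewrite /= Eh.
case: (eqVneq y k) => [Eyk|yk] /=; first subst y.
  by rewrite /dmaxif dmax_node //= mem_cat Es inE mem_rcons inE eqxx !orbT.
case: ifP => ylt.
  rewrite /dmaxif; case: ifP => // /sub_find /Hl.
  have : m \in inorder r by rewrite Es mem_rcons inE eqxx.
  by move/Hr; lia.
have yr : y \in inorder r.
  case/or3P: Hy => //; last by rewrite (negPf yk).
  by move/Hl; lia.
by rewrite IHr // Es last_rcons.
Qed.
Section Blocks.
Variables (n k : nat) (a b : nat -> nat).
Hypothesis Hk0 : 0 < k.
Hypothesis Ha1 : a 1 = 1.
Hypothesis Hbk : b k = n.
Hypothesis Hab : forall i, 1 <= i < k -> a i.+1 = (b i).+1.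
Hypothesis Hle : forall i, 1 <= i <= k -> a i <= b i.

Definition inr i := (1 <= i <= k).

Lemma blk_lt i i' : 1 <= i -> i < i' -> i' <= k -> b i < a i'.
Proof.
move=> h1; elim: i' => // i' IH Hlt Hk.
case: (ltngtP i i') => [lt|gt|<-].
- have h2 := IH lt (ltnW Hk).
  have h3 : a i' <= b i' by apply: Hle; lia.
  have h4 : a i'.+1 = (b i').+1 by apply: Hab; lia.
  lia.
- lia.
- rewrite Hab; lia.
Qed.

Lemma blk_cmp i i' x : inr i -> inr i' -> a i <= x <= b i ->
  ((x < a i') = (i < i')) /\ ((b i' < x) = (i' < i)).
Proof.
rewrite /inr => Hi Hi' Hx.
case: (ltngtP i i') => [lt|gt|<-].
- have := @blk_lt i i'; have := Hle Hi; have := Hle Hi'; lia.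
- have := @blk_lt i' i; have := Hle Hi; have := Hle Hi'; lia.
- lia.
Qed.

Lemma blk_uniq i i' x : inr i -> inr i' -> a i <= x <= b i -> a i' <= x <= b i' -> i = i'.
Proof.
move=> Hi Hi' Hx Hx'; have [h1 h2] := blk_cmp Hi Hi' Hx.
case: (ltngtP i i') h1 h2 => // lt h1 h2.
- by move: h1; have -> : x < a i' = false by lia.
- by move: h2; have -> : b i' < x = false by lia.
Qed.

Definition bkeys i := iota (a i) (b i - a i + 1).

Lemma flatten_blocks m : 1 <= m <= k ->
  flatten [seq bkeys i | i <- iota 1 m] = iota 1 (b m).
Proof.
elim: m => // m IH /andP[_ Hm].
case: (posnP m) => [->|m0].
  rewrite /= cats0 /bkeys Ha1; have : a 1 <= b 1 by apply: Hle; lia.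
  by rewrite Ha1 => h; congr iota; lia.
have -> : m.+1 = m + 1 by lia.
rewrite iotaD map_cat flatten_cat IH ?m0 ?(ltnW Hm) //= cats0 /bkeys.
have e : 1 + m = m.+1 by lia.
rewrite e Hab ?m0 //.
have h1 : a m.+1 <= b m.+1 by apply: Hle; lia.
have h2 : a m.+1 = (b m).+1 by apply: Hab; lia.
have -> : (b m).+1 = 1 + b m by lia.
by rewrite -iotaD [m + 1]addn1; congr iota; lia.
Qed.

Lemma blk_exists x : 1 <= x <= n -> exists2 i, inr i & a i <= x <= b i.
Proof.
move=> Hx.
have : x \in iota 1 n by rewrite mem_iota; lia.
rewrite -Hbk -flatten_blocks ?Hk0 ?leqnn //.
case/flatten_mapP => i; rewrite mem_iota /bkeys mem_iota => Hi Hx'.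
have Hi2 : 1 <= i <= k by lia.
have := Hle Hi2; exists i; rewrite /inr; lia.
Qed.

Fixpoint compt (I : nat -> tree) (U : tree) : tree :=
  match U with
  | Leaf => Leaf
  | Node L i R => Node (compt I L) (a i)
      (if a i < b i then Node (I i) (b i) (compt I R) else compt I R)
  end.

Lemma comp_eq I I' U : (forall i, i \in inorder U -> I i = I' i) -> compt I U = compt I' U.
Proof.
elim: U => //= L IHL i R IHR H.
have HL : forall j, j \in inorder L -> I j = I' j by move=> j Hj; apply: H; rewrite mem_cat Hj.
have HR : forall j, j \in inorder R -> I j = I' j.
  by move=> j Hj; apply: H; rewrite mem_cat inE Hj !orbT.
have Hi : I i = I' i by apply: H; rewrite mem_cat inE eqxx orbT.
by rewrite IHL // IHR // Hi.
Qed.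

Definition allr U := all inr (inorder U).

Lemma allr_node L i R : allr (Node L i R) -> [/\ allr L, inr i & allr R].
Proof. by rewrite /allr /= all_cat /= => /andP[? /andP[? ?]]. Qed.

Lemma inorder_comp I U :
  (forall i, i \in inorder U -> inr i /\ inorder (I i) = iota (a i).+1 (b i - a i - 1)) ->
  inorder (compt I U) = flatten [seq bkeys i | i <- inorder U].
Proof.
elim: U => //= L IHL i R IHR H.
have HL : forall j, j \in inorder L -> inr j /\ inorder (I j) = iota (a j).+1 (b j - a j - 1).
  by move=> j Hj; apply: H; rewrite mem_cat Hj.
have HR : forall j, j \in inorder R -> inr j /\ inorder (I j) = iota (a j).+1 (b j - a j - 1).
  by move=> j Hj; apply: H; rewrite mem_cat inE Hj !orbT.
have [Hi HI] : inr i /\ inorder (I i) = iota (a i).+1 (b i - a i - 1).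
  by apply: H; rewrite mem_cat inE eqxx orbT.
have := Hle Hi => hab.
rewrite map_cat flatten_cat /= IHL //; congr (_ ++ _).
rewrite /bkeys; case: ifP => hlt /=; rewrite IHR //.
- have E : iota (a i) (b i - a i + 1) = a i :: rcons (iota (a i).+1 (b i - a i - 1)) (b i).
    have -> : b i - a i + 1 = (b i - a i - 1 + 1).+1 by lia.
    rewrite /= iotaD -cats1 /=; do 3 f_equal; lia.
  by rewrite E HI cat_cons cat_rcons.
- by have -> : b i - a i + 1 = 1 by lia.
Qed.

Lemma bst_comp I U : 0 < k -> is_bst k U ->
  (forall i, inr i -> inorder (I i) = iota (a i).+1 (b i - a i - 1)) ->
  is_bst n (compt I U).
Proof.
move=> k0 HU HI; rewrite /is_bst inorder_comp HU ?flatten_blocks ?k0 ?leqnn ?Hbk //.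
move=> i; rewrite mem_iota => Hi; have Hi' : inr i by rewrite /inr; lia.
by split=> //; apply: HI.
Qed.

Definition ab (l : seq nat) := flatten [seq [:: a i; b i] | i <- l].

Lemma mem_ab i l : i \in l -> (a i \in ab l) && (b i \in ab l).
Proof.
move=> Hi; apply/andP; split; apply/flatten_mapP; exists i => //; by rewrite !inE eqxx ?orbT.
Qed.

Lemma ab_sub l l' : {subset l <= l'} -> {subset ab l <= ab l'}.
Proof.
move=> H x /flatten_mapP[i Hi Hx]; apply/flatten_mapP; exists i => //; exact: H.
Qed.

Lemma sub_cat_l (T : eqType) (A B C : seq T) : {subset A <= B} -> {subset A ++ C <= B ++ C}.
Proof. by move=> H z; rewrite !mem_cat => /orP[/H -> // | ->]; rewrite orbT. Qed.

Lemma anc_comp I U i x : allr U -> inr i -> a i <= x <= b i ->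
  {subset anc (compt I U) x <=
     ab (anc U i) ++ (if a i < x < b i then anc (I i) x else [::])}.
Proof.
move=> + Hi Hx; elim: U => //= L IHL i' R IHR /allr_node[aL Hi' aR].
have [c1 c2] := blk_cmp Hi Hi' Hx.
have Hab' : (a i' \in ab (anc (Node L i' R) i)) && (b i' \in ab (anc (Node L i' R) i)).
  by apply: mem_ab; rewrite /= inE eqxx.
move: Hab' => /andP[ha hb].
have sub : forall l, {subset l <= anc (Node L i' R) i} ->
   {subset ab l ++ (if a i < x < b i then anc (I i) x else [::]) <=
    ab (anc (Node L i' R) i) ++ (if a i < x < b i then anc (I i) x else [::])}.
  by move=> l Hl; apply: sub_cat_l; apply: ab_sub.
move=> z; rewrite inE => /orP[/eqP ->|]; first by rewrite inE eqxx.
case: (eqVneq x (a i')) => [E|xa].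
  by rewrite /= (blk_uniq Hi Hi' Hx) ?E ?leqnn ?Hle.
case: ifP => xlt.
  move/IHL => /(_ aL); apply: sub => w; rewrite /= inE.
  have -> : (i == i') = false by apply/negbTE; apply/eqP => e; subst; lia.
  by rewrite -c1 xlt => ->; rewrite orbT.
case: ifP => hab.
  rewrite inE => /orP[/eqP ->|]; first by rewrite !inE eqxx orbT.
  case: (eqVneq x (b i')) => [E|xb].
    by rewrite /= (blk_uniq Hi Hi' Hx) ?E ?leqnn ?Hle.
  case: ifP => xlt2.
    have e : i = i' by apply: (blk_uniq Hi Hi' Hx); lia.
    subst i'; have -> : a i < x < b i by lia.
    by move=> Hz; rewrite !inE mem_cat Hz !orbT.
  move/IHR => /(_ aR); apply: sub => w; rewrite /= inE.
  have ii' : i' < i by rewrite -c2; lia.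
  rewrite (gtn_eqF ii') ltnNge (ltnW ii') /= => ->; by rewrite orbT.
move/IHR => /(_ aR); apply: sub => w; rewrite /= inE.
have ii' : i' < i by rewrite -c2; have := Hle Hi'; lia.
rewrite (gtn_eqF ii') ltnNge (ltnW ii') /= => ->; by rewrite orbT.
Qed.

Lemma find_comp_a I U i : allr U -> inr i ->
  find_sub (compt I U) (a i) = compt I (find_sub U i).
Proof.
move=> + Hi; have hi := Hle Hi; elim: U => //= L IHL i' R IHR /allr_node[aL Hi' aR].
have hi' := Hle Hi'.
have [c1 c2] := blk_cmp (x := a i) Hi Hi' (ltac:(lia)).
case: (ltngtP i i') c1 c2 => [lt|gt|<-] c1 c2.
- rewrite c1.
  have -> : (a i == a i') = false by apply/negbTE; lia.
  exact: IHL.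
- rewrite /=.
  have -> : (a i == a i') = false by apply/negbTE; lia.
  have -> : (a i < a i') = false by lia.
  case: ifP => _ //=; last exact: IHR.
  have -> : (a i == b i') = false by apply/negbTE; lia.
  have -> : (a i < b i') = false by lia.
  exact: IHR.
- by rewrite !eqxx.
Qed.

Lemma find_comp_b I U i : allr U -> inr i -> a i < b i ->
  find_sub (compt I U) (b i) =
  if find_sub U i is Node _ _ R then Node (I i) (b i) (compt I R) else Leaf.
Proof.
move=> + Hi hi; elim: U => //= L IHL i' R IHR /allr_node[aL Hi' aR].
have hi' := Hle Hi'.
have [c1 c2] := blk_cmp (x := b i) Hi Hi' (ltac:(lia)).
case: (ltngtP i i') c1 c2 => [lt|gt|<-] c1 c2.
- rewrite c1.
  have -> : (b i == a i') = false by apply/negbTE; lia.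
  exact: IHL.
- rewrite /=.
  have -> : (b i == a i') = false by apply/negbTE; lia.
  have -> : (b i < a i') = false by lia.
  case: ifP => _ //=; last exact: IHR.
  have -> : (b i == b i') = false by apply/negbTE; lia.
  have -> : (b i < b i') = false by lia.
  exact: IHR.
- have -> : (b i == a i) = false by apply/negbTE; lia.
  have -> : (b i < a i) = false by lia.
  by rewrite hi /= eqxx.
Qed.

Lemma find_comp_int I U i x : allr U -> inr i -> a i < x < b i ->
  find_sub (compt I U) x = if find_sub U i is Leaf then Leaf else find_sub (I i) x.
Proof.
move=> + Hi hx; elim: U => //= L IHL i' R IHR /allr_node[aL Hi' aR].
have hi' := Hle Hi'.
have [c1 c2] := blk_cmp (x := x) Hi Hi' (ltac:(lia)).
case: (ltngtP i i') c1 c2 => [lt|gt|<-] c1 c2.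
- rewrite c1.
  have -> : (x == a i') = false by apply/negbTE; lia.
  exact: IHL.
- rewrite /=.
  have -> : (x == a i') = false by apply/negbTE; lia.
  have -> : (x < a i') = false by lia.
  case: ifP => _ //=; last exact: IHR.
  have -> : (x == b i') = false by apply/negbTE; lia.
  have -> : (x < b i') = false by lia.
  exact: IHR.
- have -> : (x == a i) = false by apply/negbTE; lia.
  have -> : (x < a i) = false by lia.
  have -> : (a i < b i) by lia.
  rewrite /=.
  have -> : (x == b i) = false by apply/negbTE; lia.
  by have -> : (x < b i) by lia.
Qed.


Lemma a_ge1 i : inr i -> 1 <= a i.
Proof.
rewrite /inr => Hi; case: (ltngtP 1 i) => [lt|gt|<-]; last by rewrite Ha1.
- have := @blk_lt 1 i (leqnn 1) lt; lia.
- lia.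
Qed.

Lemma b_len i : inr i -> b i <= n.
Proof.
rewrite /inr => Hi; case: (ltngtP i k) => [lt|gt|->]; last by rewrite Hbk.
- have := @blk_lt i k; have := Hle (i:=k); rewrite Hbk; lia.
- lia.
Qed.

Definition len i := b i - a i + 1.
Definition Ifam (T : nat -> tree) i := dmax (dmin (shift (a i - 1) (T i))).

Lemma inorder_nilP t : inorder t = [::] -> t = Leaf.
Proof. by case: t => //= l x r; case: (inorder l). Qed.

Lemma inorder_shT i t : inr i -> is_bst (len i) t ->
  inorder (shift (a i - 1) t) = iota (a i) (len i).
Proof.
move=> Hi Ht; rewrite inorder_shift Ht.
have -> : a i = (a i - 1) + 1 by have := a_ge1 Hi; lia.
rewrite iotaDl; apply: eq_map => z; lia.
Qed.

Lemma inorder_dminT i t : inr i -> is_bst (len i) t ->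
  inorder (dmin (shift (a i - 1) t)) = iota (a i).+1 (b i - a i).
Proof.
move=> Hi Ht; apply: (@inorder_dmin _ (a i)); rewrite inorder_shT //.
by rewrite /len addn1.
Qed.

Lemma inorder_IfamT i t : inr i -> is_bst (len i) t ->
  inorder (dmax (dmin (shift (a i - 1) t))) = iota (a i).+1 (b i - a i - 1).
Proof.
move=> Hi Ht; have := inorder_dminT Hi Ht; have := Hle Hi => hab.
case: (ltngtP (a i) (b i)) hab => // [lt|eq] _.
  move=> H; apply: (@inorder_dmax _ (b i)); rewrite H.
  set m := b i - a i - 1.
  have -> : b i - a i = m + 1 by rewrite /m; lia.
  rewrite iotaD cats1; congr rcons; rewrite /m; lia.
rewrite eq subnn /=.
by move=> /inorder_nilP ->.
Qed.

Lemma srt_iota t m p : inorder t = iota m p -> srt t.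
Proof. by rewrite /srt => ->; rewrite -sorted_pairwise ?iota_ltn_sorted //; exact: ltn_trans. Qed.

Lemma size_ab l : size (ab l) = 2 * size l.
Proof. by elim: l => //= i l IH; rewrite /ab /= -/(ab l) IH; lia. Qed.

Lemma bst_allr U : is_bst k U -> allr U.
Proof. by rewrite /allr => ->; apply/allP => i; rewrite mem_iota /inr; lia. Qed.

Lemma find_dmin_eq t t' y : srt t -> srt t' -> inorder t = inorder t' ->
  y \in inorder t -> y != head 0 (inorder t) -> find_sub t y = find_sub t' y ->
  find_sub (dmin t) y = find_sub (dmin t') y.
Proof.
move=> st st' E Hy Hh Hf; rewrite !find_sub_dminE // -?E //; by rewrite Hf.
Qed.

Lemma find_dmax_eq t t' y : srt t -> srt t' -> inorder t = inorder t' ->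
  y \in inorder t -> y != last 0 (inorder t) -> find_sub t y = find_sub t' y ->
  find_sub (dmax t) y = find_sub (dmax t') y.
Proof.
move=> st st' E Hy Hh Hf; rewrite !find_sub_dmaxE // -?E //; by rewrite Hf.
Qed.


Lemma last_iota m p : last 0 (iota m p.+1) = m + p.
Proof. by rewrite -addn1 iotaD cats1 last_rcons. Qed.

Ltac prune := repeat match goal with
 | H : ?T |- _ => lazymatch T with
     | is_true (_ <= _) => fail | is_true (_ < _) => fail
     | @eq nat _ _ => fail | is_true (_ && _) => fail
     | is_true (_ == _) => fail | is_true (_ != _) => fail | _ => clear H end end.
Ltac plia := prune; lia.

Lemma step_comp U U' T T' j s Rt Rj :
  is_bst k U -> inr j -> a j <= s <= b j ->
  (forall i, inr i -> is_bst (len i) (T i)) ->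
  step k U j Rt U' ->
  step (len j) (T j) (s - a j + 1) Rj (T' j) ->
  (forall i, i != j -> T' i = T i) ->
  step n (compt (Ifam T) U) s (undup (ab Rt ++ map (addn^~ (a j - 1)) Rj))
       (compt (Ifam T') U').
Proof.
move=> HU Hj Hs HT [[uRt sRt jRt cRt HU'] pU] [[uRj sRj sRj' cRj HTj'] pT] HT'.
have aj1 := a_ge1 Hj; have hj := Hle Hj.
have HT'i : forall i, inr i -> is_bst (len i) (T' i).
  move=> i Hi; case: (eqVneq i j) => [E|ne]; first by rewrite E. by rewrite HT' //; apply: HT.
have Hcomp : is_bst n (compt (Ifam T) U).
  by apply: bst_comp => // i Hi; exact: inorder_IfamT (HT _ Hi).
have Hcomp' : is_bst n (compt (Ifam T') U').
  by apply: bst_comp => // i Hi; exact: inorder_IfamT (HT'i _ Hi).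
have aU := bst_allr HU; have aU' := bst_allr HU'.
have inRt : forall i, i \in Rt -> inr i.
  by move=> i /sRt; rewrite HU mem_iota /inr; plia.
have inRj : forall y, y \in Rj -> 1 <= y <= len j.
  by move=> y /sRj; rewrite (HT _ Hj) mem_iota; plia.
have memR : forall z, (z \in undup (ab Rt ++ map (addn^~ (a j - 1)) Rj)) =
    (z \in ab Rt) || (z \in map (addn^~ (a j - 1)) Rj).
  by move=> z; rewrite mem_undup mem_cat.
split; first split.
- exact: undup_uniq.
- move=> z; rewrite memR Hcomp mem_iota.
  case/orP=> [/flatten_mapP[i /inRt Hi]|/mapP[y /inRj Hy ->]].
    rewrite !inE => /orP[]/eqP->; have := a_ge1 Hi; have := b_len Hi; have := Hle Hi; plia.
  have := b_len Hj; rewrite /len in Hy; plia.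
- rewrite memR; apply/orP; right; apply/mapP; exists (s - a j + 1) => //; plia.
- move=> x; rewrite memR => /orP[Hx | /mapP[y Hy ->]].
  + move: (Hx) => /flatten_mapP[i Hi Hx']; have Hi' := inRt _ Hi.
    have Hxb : a i <= x <= b i.
      by move: Hx'; rewrite !inE => /orP[]/eqP->; have := Hle Hi'; plia.
    move=> z /(anc_comp (I := Ifam T) aU Hi' Hxb).
    have -> : (a i < x < b i) = false.
      by move: Hx'; rewrite !inE => /orP[]/eqP->; plia.
    rewrite cats0 => /(ab_sub (cRt _ Hi)) Hz; by rewrite memR Hz.
  + have Hy' := inRj _ Hy.
    have Hxb : a j <= y + (a j - 1) <= b j by rewrite /len in Hy'; plia.
    move=> z /(anc_comp (I := Ifam T) aU Hj Hxb); rewrite mem_cat.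
    case/orP=> [/(ab_sub (cRt _ jRt)) Hz|]; first by rewrite memR Hz.
    case: ifP => // Hint Hz; rewrite memR; apply/orP; right.
    have E1 := inorder_shT Hj (HT _ Hj).
    have E2 := inorder_dminT Hj (HT _ Hj).
    have E3 := inorder_IfamT Hj (HT _ Hj).
    have H3 : y + (a j - 1) \in inorder (dmax (dmin (shift (a j - 1) (T j)))).
      by rewrite E3 mem_iota; plia.
    have H2 : y + (a j - 1) \in inorder (dmin (shift (a j - 1) (T j))).
      by rewrite E2 mem_iota; plia.
    have Hz2 := anc_dmin (srt_iota E1) H2 (anc_dmax (srt_iota E2) H3 Hz).
    rewrite anc_shift in Hz2.
    move/mapP: Hz2 => [w Hw ->]; apply: map_f; exact: (cRj _ Hy _ Hw).
- exact Hcomp'.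
- move=> x; rewrite Hcomp => Hx; rewrite memR negb_or => /andP[nab nmap].
  have [i Hi Hxb] : exists2 i, inr i & a i <= x <= b i.
    by apply: blk_exists; move: Hx; rewrite mem_iota add1n ltnS.
  have iU : i \in inorder U by move: Hi; rewrite HU mem_iota /inr; plia.
  have iU' : i \in inorder U' by move: Hi; rewrite HU' mem_iota /inr; plia.
  have hi := Hle Hi.
  have notj : forall i', i \notin Rt -> i' \in inorder (find_sub U i) ->
      Ifam T i' = Ifam T' i'.
    move=> i' iRt Hi'; have : i' != j.
      apply/eqP => E; subst i'; move/negP: iRt; apply; apply: (cRt _ jRt).
      exact: find_sub_anc (srt_iota HU) Hi'.
    by move=> ne; rewrite /Ifam HT'.
  case: (eqVneq x (a i)) => [Exa|xa].
  + have iRt : i \notin Rt.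
      by apply/negP => H; move: nab; rewrite Exa; case/andP: (mem_ab H) => ->.
    rewrite Exa !find_comp_a // -(pU i iU iRt).
    by apply: comp_eq => i' Hi'; apply: notj.
  case: (eqVneq x (b i)) => [Exb|xb].
  + have iRt : i \notin Rt.
      by apply/negP => H; move: nab; rewrite Exb; case/andP: (mem_ab H) => _ ->.
    have hab : a i < b i by plia.
    rewrite Exb !find_comp_b // -(pU i iU iRt).
    case E: (find_sub U i) => [|L i0 R] //.
    have ij : i != j by apply/eqP=> E'; subst; rewrite jRt in iRt.
    rewrite /Ifam HT' //; congr Node.
    apply: comp_eq => i' Hi'; apply: notj => //.
    by rewrite E /= mem_cat inE Hi' !orbT.
  have Hint : a i < x < b i by plia.
  rewrite (@find_comp_int _ U i x) // (@find_comp_int _ U' i x) //.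
  case E: (find_sub U i) => [|L1 i1 R1]; first by have := find_sub_node (srt_iota HU) iU.
  case E': (find_sub U' i) => [|L2 i2 R2]; first by have := find_sub_node (srt_iota HU') iU'.
  case: (eqVneq i j) => [Eij|ne]; last by rewrite /Ifam HT'.
  subst i.
  have Ex : x = (x - (a j - 1)) + (a j - 1) by plia.
  have yRj : (x - (a j - 1)) \notin Rj.
    apply/negP => H; move: nmap; rewrite {1}Ex; move/negP; apply; exact: (map_f (addn^~ (a j - 1)) H).
  have yT : (x - (a j - 1)) \in inorder (T j) by rewrite (HT _ Hj) mem_iota /len; plia.
  have Hf := pT _ yT yRj.
  have E1 := inorder_shT Hj (HT _ Hj); have E1' := inorder_shT Hj (HT'i _ Hj).
  have E2 := inorder_dminT Hj (HT _ Hj); have E2' := inorder_dminT Hj (HT'i _ Hj).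
  rewrite /Ifam; apply: find_dmax_eq.
  * exact: srt_iota E2.
  * exact: srt_iota E2'.
  * by rewrite E2 E2'.
  * by rewrite E2 mem_iota; plia.
  * rewrite E2; have -> : b j - a j = (b j - a j - 1).+1 by plia.
    by rewrite last_iota; apply/eqP; plia.
  apply: find_dmin_eq.
  * exact: srt_iota E1.
  * exact: srt_iota E1'.
  * by rewrite E1 E1'.
  * by rewrite E1 mem_iota /len; plia.
  * by rewrite E1 /len addn1 /=; apply/eqP; plia.
  by rewrite Ex !find_sub_shift Hf.
Qed.


Lemma sum_upd (c : nat -> nat) j x m : 1 <= j < m ->
  \sum_(1 <= i < m) (if i == j then x else c i) + c j = \sum_(1 <= i < m) c i + x.
Proof.
move=> /andP[h1 h2].
rewrite !(@big_cat_nat _ _ _ j 1 m) ?(ltnW h2) // !(@big_ltn _ _ _ j m) // eqxx.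
have E1 : \sum_(1 <= i < j) (if i == j then x else c i) = \sum_(1 <= i < j) c i.
  by apply: eq_big_nat => i /andP[_ hi]; rewrite (ltn_eqF hi).
have E2 : \sum_(j.+1 <= i < m) (if i == j then x else c i) = \sum_(j.+1 <= i < m) c i.
  by apply: eq_big_nat => i /andP[hi _]; rewrite (gtn_eqF hi).
rewrite E1 E2 /=; lia.
Qed.

Definition Sb i (S : seq nat) := [seq s - a i + 1 | s <- S & a i <= s <= b i].

Definition srel t s := inr t && (a t <= s <= b t).

Lemma sim S St : all2 srel St S ->
  forall U T ct c, is_bst k U -> (forall i, inr i -> is_bst (len i) (T i)) ->
  serves k U St ct -> (forall i, inr i -> serves (len i) (T i) (Sb i S) (c i)) ->
  exists2 c', c' <= 2 * ct + \sum_(1 <= i < k.+1) c i & serves n (compt (Ifam T) U) S c'.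
Proof.
elim: S St => [|s S IH] [|t St] //=.
  by move=> _ U T ct c _ _ _ _; exists 0.
case/andP=> /andP[Ht Hst] Hall U T ct c HU HT [Rt [U' [ct' [stU svU Ect]]]] HS.
have := HS t Ht; rewrite /Sb /= Hst /= => -[Rj [Tj' [cj' [stT svT Ecj]]]].
pose T' i := if i == t then Tj' else T i.
pose c' i := if i == t then cj' else c i.
have HU' : is_bst k U' by case: stU => [[_ _ _ _ ?] _].
have HT' : forall i, inr i -> is_bst (len i) (T' i).
  move=> i Hi; rewrite /T'; case: (eqVneq i t) => [E|ne]; last exact: HT.
  by rewrite E; case: stT => [[_ _ _ _ ?] _].
have HS' : forall i, inr i -> serves (len i) (T' i) (Sb i S) (c' i).
  move=> i Hi; rewrite /T' /c'; case: (eqVneq i t) => [E|ne].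
    by rewrite E.
  have := HS i Hi; rewrite /Sb /=.
  have -> : (a i <= s <= b i) = false.
    apply/negbTE/negP => H; move/eqP: ne; apply.
    exact: (blk_uniq Hi Ht H Hst).
  by [].
have [c'' Hc'' sv''] := IH St Hall U' T' ct' c' HU' HT' svU HS'.
have ET : T' t = Tj' by rewrite /T' eqxx.
rewrite -ET in stT.
have Hstep := step_comp HU Ht Hst HT stU stT (fun i ne => ifN_eq _ _ ne).
set R := undup _ in Hstep.
exists (size R + c''); last by exists R, (compt (Ifam T') U'), c''.
have hR : size R <= 2 * size Rt + size Rj.
  rewrite /R; apply: leq_trans (size_undup _) _; rewrite size_cat size_ab size_map //.
have hk : 1 <= t < k.+1 by move: Ht; rewrite /inr; lia.
have := sum_upd c cj' hk.
rewrite -/(c' t) (_ : \sum_(1 <= i < k.+1) (if i == t then cj' else c i) = \sum_(1 <= i < k.+1) c' i) //.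
move=> hs; rewrite Ect; move: Hc'' hR hs; rewrite Ecj; lia.
Qed.

End Blocks.
Lemma OPT_spec N S c : feasible N S c -> feasible N S (OPT N S) /\ OPT N S <= c.
Proof.
move=> Hc; rewrite /OPT; case: boolp.pselect => [H|H]; last by exfalso; apply: H; exists c.
case: ex_minnP => m /boolp.asboolP Hm Hmin; split => //.
by apply: Hmin; apply/boolp.asboolP.
Qed.

Fixpoint spine m p := if p is p'.+1 then Node Leaf m (spine m.+1 p') else Leaf.
Lemma inorder_spine m p : inorder (spine m p) = iota m p.
Proof. by elim: p m => //= p IH m; rewrite IH. Qed.

Lemma feas_all N S : all (fun s => 1 <= s <= N) S -> exists c, feasible N S c.
Proof.
move=> HS; exists (size S * N), (spine 1 N); split; first exact: inorder_spine.
elim: S HS => //= s S IH /andP[Hs HS].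
exists (iota 1 N), (spine 1 N), (size S * N); split; last by rewrite size_iota mulSn.
- split; first split.
  + exact: iota_uniq.
  + by move=> z; rewrite inorder_spine.
  + by rewrite mem_iota; lia.
  + by move=> x _ z /anc_in; rewrite inorder_spine.
  + exact: inorder_spine.
  + by move=> x; rewrite inorder_spine => ->.
- exact: IH.
Qed.

Lemma all2_nth (P : nat -> nat -> bool) (s t : seq nat) : size s = size t ->
  (forall j, j < size t -> P (nth 0 s j) (nth 0 t j)) -> all2 P s t.
Proof.
elim: s t => [|x s IH] [|y t] //= [E] H.
rewrite (H 0) //= IH // => j Hj; exact: (H j.+1).
Qed.

Unset Implicit Arguments.

Theorem mainTheorem10 (n k : nat) (a b : nat -> nat) (S St : seq nat) :
  all (fun s => 1 <= s <= n) S ->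
  0 < k ->
  a 1 = 1 ->
  b k = n ->
  (forall i, 1 <= i < k -> a i.+1 = (b i).+1) ->
  (forall i, 1 <= i <= k -> a i <= b i) ->
  size St = size S ->
  (forall j i, j < size S ->
     (nth 0 St j = i) <-> (1 <= i <= k /\ a i <= nth 0 S j <= b i)) ->
  OPT n S <=
    \sum_(1 <= i < k.+1)
       OPT (b i - a i + 1) [seq s - a i + 1 | s <- S & a i <= s <= b i]
    + 3 * OPT k St.
Proof.
move=> HS Hk0 Ha1 Hbk Hab Hle Hsz Hnth.
have Hall : all2 (srel k a b) St S.
  apply: all2_nth => // j Hj; have [h1 h2] := (Hnth j (nth 0 St j) Hj).1 erefl.
  by rewrite /srel /inr h1 h2.
have HSt : all (fun s => 1 <= s <= k) St.
  elim: St S Hall {Hsz Hnth HS} => [|t St IH] [|s S] //= /andP[/andP[Ht _] H].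
  by move: Ht; rewrite /inr => ->; exact: IH H.
have [ct0 Hct0] := feas_all HSt.
have [[U0 [HU0 sU0]] _] := OPT_spec Hct0.
have Hblk : forall i, exists T0, inr k i ->
    is_bst (len a b i) T0 /\ serves (len a b i) T0 (Sb a b i S) (OPT (len a b i) (Sb a b i S)).
  move=> i; case: (boolP (inr k i)) => Hi; last by exists Leaf.
  have : all (fun s => 1 <= s <= len a b i) (Sb a b i S).
    apply/allP => z /mapP[s]; rewrite mem_filter => /andP[Hs _] ->.
    by rewrite /len; lia.
  case/feas_all => c /OPT_spec [[T0 [H1 H2]] _]; by exists T0.
have [T Hf] := boolp.choice Hblk.
have [c' Hc' sv] := sim Hk0 Ha1 Hbk Hab Hle Hall (c := fun i => OPT (len a b i) (Sb a b i S))
   (T := T) HU0 (fun i Hi => (Hf i Hi).1) sU0 (fun i Hi => (Hf i Hi).2).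
have Hfeas : feasible n S c'.
  exists (compt a b (Ifam a T) U0); split => //.
  apply: (bst_comp Hk0 Ha1 Hbk Hab Hle) => // i Hi.
  rewrite /Ifam; exact: (inorder_IfamT Hk0 Ha1 Hbk Hab Hle Hi (Hf i Hi).1).
have [_ Hle'] := OPT_spec Hfeas.
apply: (leq_trans Hle'); apply: (leq_trans Hc').
rewrite /len /Sb in Hc' *; lia.
Qed.
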